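(* Fix $M>0$ and $m\in(-1,0)$, and let $-2<a_2<a_1<0$. For $j=1,2$ let $r_j(x)=a_jx/(1+x)$, $$\alpha_{+j}=\frac{M}{r_j(M)}-\frac{r_j(M)}{2a_j r_j(m)},\qquad \beta_{+j}=\frac{M}{r_j(M)}+\frac{r_j(M)}{2a_j r_j(m)}=\frac{1+M}{a_j}+\frac{M(m+1)}{2a_jm(1+M)},$$ and assume $\beta_{+1}<0$ and $\beta_{+2}<0$. Define $z_{+j}(s)=M$ for $s\le\alpha_{+j}$, $z_{+j}(s)=M+\frac{a_j r_j(m)}{2}(s-\alpha_{+j})^2$ for $\alpha_{+j}\le s\le\beta_{+j}$, and $z_{+j}(s)=r_j(M)s$ for $\beta_{+j}\le s\le 0$. Then $z_{+1}(s)\le z_{+2}(s)$ for all $s\in[-1,0]$. *)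

(* Defs.v *)
From Stdlib Require Import Reals Lra.
Open Scope R_scope.

Definition rfun (a x : R) : R := a * x / (1 + x).

Definition alpha_p (a M m : R) : R :=
  M / rfun a M - rfun a M / (2 * a * rfun a m).

Definition beta_p (a M m : R) : R :=
  M / rfun a M + rfun a M / (2 * a * rfun a m).

(* z_+(s): M for s <= alpha, quadratic on [alpha, beta], r(M) s for s >= beta.
   The pieces agree at the junctions, so the first-match convention is harmless. *)
Definition z_p (a M m s : R) : R :=
  if Rle_dec s (alpha_p a M m) then M
  else if Rle_dec s (beta_p a M m) then
    M + a * rfun a m / 2 * (s - alpha_p a M m) ^ 2
  else rfun a M * s.

(* Main.v *)
Require Import Defs.
From Stdlib Require Import Reals.
From Stdlib Require Import Lra Psatz.
Open Scope R_scope.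

Definition fK (M : R) := 1 + M.
Definition fq (m : R) := m / (1 + m).
Definition fL (M m : R) := M / (2 * fq m * fK M).

Definition ff (M m u : R) : R :=
  if Rle_dec (fK M - fL M m) u then M
  else if Rle_dec (fK M + fL M m) u then M + fq m / 2 * (u - (fK M - fL M m)) ^ 2
  else M * u / fK M.

Lemma div_neg_iff (a s X : R) : a < 0 -> (s <= X / a <-> X <= a * s).
Proof.
  intro ha. set (y := X / a).
  assert (X = a * y) by (unfold y; field; lra).
  rewrite H. split; intro; nra.
Qed.

Lemma zp_ff (a M m s : R) : 0 < M -> -1 < m -> m < 0 -> a < 0 ->
  z_p a M m s = ff M m (a * s).
Proof.
  intros hM hm1 hm2 ha.
  assert (hal : alpha_p a M m = (fK M - fL M m) / a).
  { unfold alpha_p, rfun, fL, fq, fK. field. repeat split; lra. }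
  assert (hbe : beta_p a M m = (fK M + fL M m) / a).
  { unfold beta_p, rfun, fL, fq, fK. field. repeat split; lra. }
  unfold z_p, ff. rewrite hal, hbe.
  destruct (Rle_dec s ((fK M - fL M m) / a)) as [h1|h1];
  destruct (Rle_dec (fK M - fL M m) (a * s)) as [h2|h2];
  try (apply (div_neg_iff a s) in h1; [|lra]; lra);
  try (exfalso; apply h1; apply (div_neg_iff a s); lra); try reflexivity.
  destruct (Rle_dec s ((fK M + fL M m) / a)) as [h3|h3];
  destruct (Rle_dec (fK M + fL M m) (a * s)) as [h4|h4];
  try (apply (div_neg_iff a s) in h3; [|lra]; lra);
  try (exfalso; apply h3; apply (div_neg_iff a s); lra).
  - unfold rfun, fq. set (X := fK M - fL M m).
    replace (a * s - X) with (a * (s - X / a)) by (field; lra).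
    field. lra.
  - unfold rfun, fK. field. lra.
Qed.

Lemma ff_mono (M m u v : R) : 0 < M -> -1 < m -> m < 0 ->
  0 < fK M + fL M m -> u <= v -> ff M m u <= ff M m v.
Proof.
  intros hM hm1 hm2 hQ huv.
  assert (hK : 0 < fK M) by (unfold fK; lra).
  assert (hq : fq m < 0).
  { unfold fq. apply Rmult_lt_reg_r with (1 + m); [lra|].
    field_simplify; lra. }
  assert (hL : 2 * fq m * fK M * fL M m = M).
  { unfold fL. field. split; lra. }
  assert (hqK : fq m * fK M < 0) by nra.
  assert (hLn : fL M m < 0) by nra.
  set (K := fK M) in *. set (L := fL M m) in *. set (q := fq m) in *.
  assert (hlin : forall w, M * w / K = M * w * / K) by (intros; reflexivity).
  assert (hKi : K * / K = 1) by (field; lra).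
  assert (hKp : 0 < / K) by (apply Rinv_0_lt_compat; lra).
  assert (hjun : M * (K + L) / K = M + q / 2 * ((K + L) - (K - L)) ^ 2).
  { assert (hMK : M * / K = 2 * q * L) by (rewrite <- hL; field; lra).
    replace (M * (K + L) / K) with ((M * / K) * (K + L)) by (field; lra).
    rewrite hMK. rewrite <- hL. field. }
  unfold ff; fold K L q.
  destruct (Rle_dec (K - L) u); destruct (Rle_dec (K - L) v); try lra.
  - destruct (Rle_dec (K + L) u).
    + assert (0 <= (u - (K - L)) ^ 2) by (apply pow2_ge_0). nra.
    + rewrite hlin. assert (M * u * / K <= M * K * / K).
      { apply Rmult_le_compat_r; nra. }
      nra.
  - destruct (Rle_dec (K + L) u); destruct (Rle_dec (K + L) v); try lra.
    + assert (0 <= (u - (K - L)) ^ 2 - (v - (K - L)) ^ 2) by nra.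
      nra.
    + rewrite hlin. assert (M * u * / K <= M * (K + L) / K).
      { rewrite hlin. apply Rmult_le_compat_r; nra. }
      assert (0 <= ((K + L) - (K - L)) ^ 2 - (v - (K - L)) ^ 2) by nra.
      nra.
    + rewrite !hlin. apply Rmult_le_compat_r; nra.
Qed.

Theorem lemma3p8 (M m a1 a2 : R)
  (hM : 0 < M) (hm1 : -1 < m) (hm2 : m < 0)
  (ha2 : -2 < a2) (ha21 : a2 < a1) (ha1 : a1 < 0)
  (hb1 : beta_p a1 M m < 0) (hb2 : beta_p a2 M m < 0) :
  forall s : R, -1 <= s <= 0 -> z_p a1 M m s <= z_p a2 M m s.
Proof.
  intros s hs.
  rewrite (zp_ff a1 M m s), (zp_ff a2 M m s); try lra.
  apply ff_mono; try lra; [|nra].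
  assert (hbe : beta_p a1 M m = (fK M + fL M m) / a1).
  { unfold beta_p, rfun, fL, fq, fK. field. repeat split; lra. }
  rewrite hbe in hb1.
  set (X := fK M + fL M m) in *.
  assert (X = a1 * (X / a1)) by (field; lra).
  nra.
Qed.
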